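(* If a partial isometry $W\in\mathbf{M}_{2N}(\mathbb{C})$ is self-dual ($W^\sharp=W$), then the initial space $(\ker W)^\perp$ of $W$ has even dimension and $\mathcal{T}$ maps the initial space isometrically onto the final space $(\ker W^* )^\perp$ of $W$.
   Context: A partial isometry is $W$ with $WW^*W=W$. For $X\in\mathbf{M}_{2N}(\mathbb{C})$ in $N\times N$ blocks $X=\begin{bmatrix}A&B\\C&D\end{bmatrix}$, $X^{\sharp}=\begin{bmatrix}D^{\mathrm T}&-B^{\mathrm T}\\-C^{\mathrm T}&A^{\mathrm T}\end{bmatrix}$. $\mathcal{T}:\mathbb{C}^{2N}\to\mathbb{C}^{2N}$ is the conjugate-linear map $\mathcal{T}\begin{bmatrix}\mathbf v\\ \mathbf w\end{bmatrix}=\begin{bmatrix}-\overline{\mathbf w}\\ \overline{\mathbf v}\end{bmatrix}$ for $\mathbf v,\mathbf w\in\mathbb{C}^N$. *)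

(* Defs.v *)
From HB Require Import structures.
From mathcomp Require Import all_boot all_order all_algebra.
Set Implicit Arguments. Unset Strict Implicit. Unset Printing Implicit Defensive.
Import Order.TTheory GRing.Theory Num.Theory.
Local Open Scope ring_scope.

(* Scalars: an arbitrary numClosedFieldType C (e.g. R[i] for a real closed
   field R), with complex conjugation Num.conj (notation x^* ). *)

Section Defs.
Variable C : numClosedFieldType.

Definition adjmx m n (A : 'M[C]_(m, n)) : 'M[C]_(n, m) :=
  map_mx (fun x => x^*) A^T.

Definition partial_isometry n (W : 'M[C]_n) : Prop :=
  W *m adjmx W *m W = W.

Definition sharp N (X : 'M[C]_(N + N)) : 'M[C]_(N + N) :=
  block_mx (drsubmx X)^T (- (ursubmx X)^T)
           (- (dlsubmx X)^T) (ulsubmx X)^T.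

Definition Tmap N (x : 'cV[C]_(N + N)) : 'cV[C]_(N + N) :=
  col_mx (- map_mx (fun z => z^*) (dsubmx x)) (map_mx (fun z => z^*) (usubmx x)).

Definition norm2 n (x : 'cV[C]_n) : C := \sum_i x i 0 * (x i 0)^*.

(* Subspaces of C^n are represented (mxalgebra style) as row spaces of
   square matrices, whose rows are the transposes of the column vectors. *)

(* ker A = { v | A v = 0 }, as the row space of { v^T | v^T A^T = 0 } *)
Definition kerS n (A : 'M[C]_n) : 'M[C]_n := kermx A^T.

(* orthogonal complement w.r.t. the Hermitian inner product:
   x in S^perp  iff  <x, s> = sum_j x_j conj(s_j) = 0 for every row s of S *)
Definition orthS n (S : 'M[C]_n) : 'M[C]_n := kermx (adjmx S).

Definition initial_space n (W : 'M[C]_n) : 'M[C]_n := orthS (kerS W).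
Definition final_space n (W : 'M[C]_n) : 'M[C]_n := orthS (kerS (adjmx W)).

Definition inS n (v : 'cV[C]_n) (S : 'M[C]_n) : bool := (v^T <= S)%MS.

End Defs.

(* Main.v *)
Require Import Defs.
From HB Require Import structures.
From mathcomp Require Import all_boot all_order all_algebra.
Import Order.TTheory GRing.Theory Num.Theory.
Local Open Scope ring_scope.
Lemma skew_aux (C : numClosedFieldType) n r (K : 'M[C]_n) (B : 'M[C]_(r, n))
  (L : 'M[C]_(n, r)) :
  K^T = - K -> row_free B -> K = L *m B -> (r <= \rank K)%N -> ~~ odd r.
Proof.
move=> skK frB KL rK.
have [R BR] := row_freeP frB.
have LX : L = B^T *m (- L^T *m R).
  have : L *m B *m R = - (B^T *m L^T) *m R.
    by rewrite -KL -trmx_mul -KL skK opprK.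
  rewrite -mulmxA BR mulmx1 => E. by rewrite {1}E !mulNmx mulmxN mulmxA.
set X := - L^T *m R in LX.
have KX : K = B^T *m X *m B by rewrite KL {1}LX.
clearbody X; clear LX.
have RB : R^T *m B^T = 1%:M by rewrite -trmx_mul BR trmx1.
have skX : X^T = - X.
  have : R^T *m K^T *m R = R^T *m (-K) *m R by rewrite skK.
  rewrite {1}KX !trmx_mul trmxK -!mulmxA BR mulmx1 !mulmxA RB mul1mx.
  rewrite KX mulmxN mulNmx !mulmxA RB mul1mx -!mulmxA BR mulmx1.
  by [].
have uX : X \in unitmx.
  rewrite -row_free_unit /row_free eqn_leq rank_leq_row /=.
  by rewrite (leq_trans rK) // KX (leq_trans (mxrankM_maxl _ _)) // mxrankM_maxr.
have := congr1 determinant skX.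
rewrite det_tr -scaleN1r detZ => dX.
apply/negP => oddr.
move: dX; rewrite -signr_odd oddr expr1 mulN1r => /eqP.
rewrite -addr_eq0 -mulr2n mulrn_eq0 /= => /eqP d0.
by move: uX; rewrite unitmxE d0 unitr0.
Qed.

Lemma skew_rank_even (C : numClosedFieldType) n (K : 'M[C]_n) :
  K^T = - K -> ~~ odd (\rank K).
Proof.
move=> skK.
have /submxP [L KL] : (K <= row_base K)%MS by rewrite eq_row_base.
exact: (@skew_aux C _ _ K _ L skK (row_base_free K) KL (leqnn _)).
Qed.

Lemma adjmxM (C : numClosedFieldType) m n p (A : 'M[C]_(m, n)) (B : 'M[C]_(n, p)) :
  adjmx (A *m B) = adjmx B *m adjmx A.
Proof. by rewrite /adjmx trmx_mul map_mxM. Qed.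

Lemma cjK (C : numClosedFieldType) m n (A : 'M[C]_(m, n)) :
  map_mx (@Num.conj C) (map_mx (@Num.conj C) A) = A.
Proof. by apply/matrixP => i j; rewrite !mxE conjCK. Qed.

Lemma adjmxK (C : numClosedFieldType) m n (A : 'M[C]_(m, n)) :
  adjmx (adjmx A) = A.
Proof. by apply/matrixP => i j; rewrite !mxE conjCK. Qed.

Lemma cj_adj (C : numClosedFieldType) m n (A : 'M[C]_(m, n)) :
  map_mx (@Num.conj C) (adjmx A) = A^T.
Proof. by apply/matrixP => i j; rewrite !mxE conjCK. Qed.

Lemma pi_adj (C : numClosedFieldType) n (W : 'M[C]_n) :
  partial_isometry W -> partial_isometry (adjmx W).
Proof.
rewrite /partial_isometry => h.
have := congr1 (@adjmx C n n) h.
by rewrite !adjmxM mulmxA.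
Qed.

Lemma nondeg (C : numClosedFieldType) n (x : 'cV[C]_n) :
  x^T *m map_mx (@Num.conj C) x = 0 -> x = 0.
Proof.
move=> h0; have := congr1 (fun M : 'M[C]_1 => M 0 0) h0; rewrite !mxE => h.
have: forall i, x i 0 * (x i 0)^* == 0.
  move=> i; apply/eqP.
  move/eqP: h; rewrite psumr_eq0 => [/allP H|j _]; last first.
    by rewrite !mxE mul_conjC_ge0.
  by move: (H i (mem_index_enum i)); rewrite !mxE => /implyP /(_ isT) /eqP.
move=> H; apply/matrixP => i j; rewrite ord1 mxE.
by apply/eqP; rewrite -mul_conjC_eq0 H.
Qed.

Lemma initialP (C : numClosedFieldType) n (W : 'M[C]_n) (v : 'cV[C]_n) :
  partial_isometry W ->
  inS v (initial_space W) = (adjmx W *m W *m v == v).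
Proof.
rewrite /partial_isometry /inS /initial_space /orthS /kerS => Wi.
rewrite sub_kermx.
set K := kermx W^T.
have KW : K *m W^T = 0 by apply: mulmx_ker.
apply/eqP/eqP => [h | <-].
  set x := v - adjmx W *m W *m v.
  have Wx : W *m x = 0.
    by rewrite /x mulmxBr !mulmxA Wi subrr.
  have /submxP [D xD] : (x^T <= K)%MS.
    by rewrite sub_kermx -trmx_mul Wx trmx0.
  have Kv : K *m map_mx (@Num.conj C) v = 0.
    have : (map_mx (@Num.conj C) K *m v) = 0.
      by rewrite -[LHS]trmxK trmx_mul map_trmx -/(adjmx K) h trmx0.
    by move/(congr1 (map_mx (@Num.conj C))); rewrite map_mxM cjK map_mx0.
  have : x^T *m map_mx (@Num.conj C) x = 0.
    rewrite {2}/x map_mxB !map_mxM cj_adj mulmxBr !mulmxA -trmx_mul Wx trmx0.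
    by rewrite !mul0mx subr0 xD -mulmxA Kv mulmx0.
  move/nondeg; rewrite /x => /eqP; rewrite subr_eq0 => /eqP.
  move=> E. by rewrite -E.
have adjT : (adjmx W)^T = adjmx W^T by apply/matrixP => i j; rewrite !mxE.
rewrite !trmx_mul adjT -!mulmxA -adjmxM KW.
by rewrite /adjmx trmx0 map_mx0 !mulmx0.
Qed.
Lemma rank_initial (C : numClosedFieldType) n (W : 'M[C]_n) :
  \rank (initial_space W) = \rank W.
Proof.
rewrite /initial_space /orthS /kerS mxrank_ker /adjmx mxrank_map mxrank_tr.
by rewrite mxrank_ker mxrank_tr subKn ?rank_leq_row.
Qed.

Definition Jm (C : numClosedFieldType) N : 'M[C]_(N + N) :=
  block_mx 0 1%:M (- 1%:M) 0.

Lemma JtE (C : numClosedFieldType) N : (Jm C N)^T = - Jm C N.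
Proof.
by rewrite /Jm tr_block_mx opp_block_mx !trmx0 trmx1 raddfN /= trmx1 opprK !oppr0.
Qed.

Lemma JJ (C : numClosedFieldType) N : Jm C N *m Jm C N = - 1%:M.
Proof.
rewrite /Jm mulmx_block !mul0mx !mulmx0 !mul1mx !mulmx1 !add0r !addr0.
by rewrite [in RHS]scalar_mx_block opp_block_mx oppr0.
Qed.

Lemma JJt (C : numClosedFieldType) N : Jm C N *m (Jm C N)^T = 1%:M.
Proof. by rewrite JtE mulmxN JJ opprK. Qed.

Lemma JtJ (C : numClosedFieldType) N : (Jm C N)^T *m Jm C N = 1%:M.
Proof. by rewrite JtE mulNmx JJ opprK. Qed.

Lemma JtJt (C : numClosedFieldType) N : (Jm C N)^T *m (Jm C N)^T = - 1%:M.
Proof. by rewrite JtE mulNmx mulmxN opprK JJ. Qed.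

Lemma cjJ (C : numClosedFieldType) N : map_mx (@Num.conj C) (Jm C N) = Jm C N.
Proof. by rewrite /Jm map_block_mx !map_mx0 map_mxN map_mx1. Qed.

Lemma sharpE (C : numClosedFieldType) N (X : 'M[C]_(N + N)) :
  sharp X = Jm C N *m X^T *m (Jm C N)^T.
Proof.
rewrite -[X]submxK.
move: (ulsubmx X) (ursubmx X) (dlsubmx X) (drsubmx X) => a b c d.
rewrite /sharp block_mxKul block_mxKur block_mxKdl block_mxKdr.
rewrite JtE mulmxN /Jm tr_block_mx !mulmx_block.
rewrite !(mul0mx, mulmx0, mul1mx, mulmx1, add0r, addr0, mulNmx, mulmxN).
by rewrite opp_block_mx !opprK.
Qed.

Lemma TmapE (C : numClosedFieldType) N (v : 'cV[C]_(N + N)) :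
  Tmap v = (Jm C N)^T *m map_mx (@Num.conj C) v.
Proof.
rewrite /Tmap JtE /Jm -{3}[v]vsubmxK map_col_mx opp_block_mx mul_block_col.
by rewrite !oppr0 opprK !mul0mx add0r addr0 !mulNmx !mul1mx.
Qed.

Lemma norm2_col (C : numClosedFieldType) m n (a : 'cV[C]_m) (b : 'cV[C]_n) :
  norm2 (col_mx a b) = norm2 a + norm2 b.
Proof.
rewrite /norm2 big_split_ord /=.
by congr (_ + _); apply: eq_bigr => i _; rewrite ?col_mxEu ?col_mxEd.
Qed.

Lemma norm2T (C : numClosedFieldType) N (x : 'cV[C]_(N + N)) :
  norm2 (Tmap x) = norm2 x.
Proof.
rewrite /Tmap -{3}[x]vsubmxK !norm2_col addrC.
congr (_ + _); rewrite /norm2; apply: eq_bigr => i _;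
  rewrite !mxE ?rmorphN /= conjCK ?mulrNN mulrC //.
Qed.

Theorem mainTheorem13 (C : numClosedFieldType) (N : nat) (W : 'M[C]_(N + N)) :
  partial_isometry W -> sharp W = W ->
  ~~ odd (\rank (initial_space W)) /\
  (forall v, inS v (initial_space W) -> inS (Tmap v) (final_space W)) /\
  (forall u v, inS u (initial_space W) -> inS v (initial_space W) ->
     norm2 (Tmap u - Tmap v) = norm2 (u - v)) /\
  (forall w, inS w (final_space W) ->
     exists2 v, inS v (initial_space W) & Tmap v = w).
Proof.
move=> Wi Wsh.
set J := Jm C N.
have Wsd : W = J *m W^T *m J^T by rewrite -{1}Wsh sharpE.
have WJ : W *m J = J *m W^T by rewrite {1}Wsd -mulmxA JtJ mulmx1.
have WT : W^T = J *m W *m J^T.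
  by rewrite {1}Wsd !trmx_mul !trmxK mulmxA.
have Wadj : adjmx W = J *m map_mx (@Num.conj C) W *m J^T.
  by rewrite /adjmx WT !map_mxM -map_trmx cjJ.
have finE : final_space W = initial_space (adjmx W) by [].
have Jfree : row_free J.
  by rewrite row_free_unit; case: (mulmx1_unit (JJt C N)).
split.
  rewrite rank_initial -(mxrankMfree _ Jfree); apply: skew_rank_even.
  by rewrite trmx_mul WJ JtE mulNmx.
split.
  move=> v; rewrite initialP // => /eqP hv.
  rewrite finE initialP; last exact: pi_adj.
  rewrite adjmxK TmapE Wadj.
  have hc : W^T *m (map_mx (@Num.conj C) W *m map_mx (@Num.conj C) v)
      = map_mx (@Num.conj C) v.
    by rewrite mulmxA -cj_adj -!map_mxM hv.
  rewrite !mulmxA WJ -(mulmxA _ J^T J^T) JtJt mulmxN mulmx1 mulNmx.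
  by rewrite -!mulmxA hc JtE mulNmx.
split.
  move=> u v _ _; rewrite !TmapE -mulmxBr -map_mxB -TmapE norm2T.
  by [].
move=> w; rewrite finE initialP; last exact: pi_adj.
rewrite adjmxK => /eqP hw.
exists (J *m map_mx (@Num.conj C) w); last first.
  by rewrite TmapE map_mxM cjJ cjK mulmxA JtJ mul1mx.
rewrite initialP // Wadj.
have hc : map_mx (@Num.conj C) W *m (W^T *m map_mx (@Num.conj C) w)
    = map_mx (@Num.conj C) w.
  by rewrite mulmxA -cj_adj -!map_mxM hw.
rewrite !mulmxA -(mulmxA _ W J) WJ mulmxA -(mulmxA _ J^T J) JtJ mulmx1.
by rewrite -!mulmxA hc.
Qed.
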